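(* Consider the equioriented quiver $1'\xrightarrow{a_0}1\xrightarrow{a_1}2\to\cdots\to r\xrightarrow{a_r}r+1$, with dimension $m$ at the framed vertex $1'$ and dimension $n$ at the nonframed vertices $1,\dots,r+1$, with the complete standard filtration at the nonframed vertices. Then $F^{\bullet}Rep(Q,\beta)=M_{n\times m}\oplus\mathfrak{b}^{\oplus r}$, and for every $1\le p\le n$, every $0\le k\le r$ and every $1\le i_1<\cdots<i_{n-p+1}\le m$, the minor of the $n\times m$ matrix $A_kA_{k-1}\cdots A_0$ with rows $p,p+1,\dots,n$ and columns $i_1,\dots,i_{n-p+1}$ is a $\mathbb{U}_\beta$-invariant polynomial.
   Context: The representation space consists of tuples $(A_0,A_1,\dots,A_r)$ with $A_0\in M_{n\times m}$ an arbitrary complex $n\times m$ matrix (no filtration at the framed vertex) and $A_1,\dots,A_r$ upper triangular $n\times n$ matrices ($\mathfrak{b}$ the upper triangular matrices). $\mathbb{U}_\beta=U^{r+1}$, with $U$ the upper unitriangular $n\times n$ matrices, acting by $(u_1,\dots,u_{r+1})\cdot(A_0,A_1,\dots,A_r)=(u_1A_0,u_2A_1u_1^{-1},\dots,u_{r+1}A_ru_r^{-1})$. *)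

(* Defs.v *)
From HB Require Import structures.
From mathcomp Require Import all_boot all_order all_algebra.
From mathcomp Require Import reals.
From mathcomp.real_closed Require Export complex.
From mathcomp Require Export all_boot all_order all_algebra reals.
Set Implicit Arguments. Unset Strict Implicit. Unset Printing Implicit Defensive.
Import GRing.Theory.
Local Open Scope ring_scope.

Definition upper_tri (F : nzRingType) (n : nat) (M : 'M[F]_n) : Prop :=
  forall i j : 'I_n, (j < i)%N -> M i j = 0.

Definition unitri (F : nzRingType) (n : nat) (M : 'M[F]_n) : Prop :=
  upper_tri M /\ forall i : 'I_n, M i i = 1.

(* A point of the representation space is (A0, A 1, ..., A r), A0 : n x m,
   A k : n x n upper triangular for 1 <= k <= r (other values of A unused).
   path_prod A0 A k = A_k A_{k-1} ... A_1 A_0. *)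
Fixpoint path_prod (F : nzRingType) (n m : nat) (A0 : 'M[F]_(n, m))
  (A : nat -> 'M[F]_n) (k : nat) : 'M[F]_(n, m) :=
  match k with
  | 0 => A0
  | k'.+1 => A k'.+1 *m path_prod A0 A k'
  end.

(* Action of (u_1, ..., u_{r+1}) in U^{r+1}:
   (u_1 A0, u_2 A1 u_1^{-1}, ..., u_{r+1} A_r u_r^{-1}). *)
Definition act0 (F : fieldType) (n m : nat) (u : nat -> 'M[F]_n)
  (A0 : 'M[F]_(n, m)) : 'M[F]_(n, m) := u 1%N *m A0.
Definition actA (F : fieldType) (n : nat) (u : nat -> 'M[F]_n)
  (A : nat -> 'M[F]_n) : nat -> 'M[F]_n :=
  fun k => u k.+1 *m A k *m invmx (u k).

Definition minor (F : comNzRingType) (n m q : nat) (f : 'I_q -> 'I_n)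
  (s : 'I_q -> 'I_m) (M : 'M[F]_(n, m)) : F := \det (mxsub f s M).

(* Main.v *)
Require Import Defs.
From mathcomp Require Import zify.
Local Open Scope ring_scope.
Import GRing.Theory.

Lemma det_unitri_sub (F : comNzRingType) n q (u : 'M[F]_n) (g : 'I_q -> 'I_n) :
  unitri u -> (forall a b : 'I_q, (a < b)%N -> (g a < g b)%N) ->
  \det (mxsub g g u) = 1.
Proof.
move=> [Hut Hd] Hg; rewrite -det_tr det_trig.
  by rewrite big1 // => i _; rewrite !mxE Hd.
apply/forallP => i; apply/forallP => j; apply/implyP => Hij.
by rewrite !mxE Hut ?Hg.
Qed.

Lemma det_unitri (F : comNzRingType) n (u : 'M[F]_n) : unitri u -> \det u = 1.
Proof.
move=> Hu; have := @det_unitri_sub _ n n u id Hu (fun a b h => h).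
by rewrite mxsub_id.
Qed.

Lemma mxsub_mul (F : comNzRingType) n m p (u : 'M[F]_n) (P : 'M[F]_(n, m))
  (f : 'I_(n - p + 1) -> 'I_n) (s : 'I_(n - p + 1) -> 'I_m) :
  upper_tri u -> (1 <= p <= n)%N ->
  (forall a : 'I_(n - p + 1), nat_of_ord (f a) = (p.-1 + a)%N) ->
  mxsub f s (u *m P) = mxsub f f u *m mxsub f s P.
Proof.
move=> Hut /andP[Hp1 Hpn]; case: n u P f s Hut Hpn => [|n] u P f s Hut Hpn Hf.
  by exfalso; lia.
apply/matrixP => a c; rewrite !mxE.
pose G j := u (f a) (inord j) * P (inord j) (s c).
transitivity (\sum_(0 <= j < n.+1) G j).
  by rewrite big_mkord; apply: eq_bigr => j _; rewrite /G inord_val.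
rewrite (big_cat_nat _ (n := p.-1)) //=; last by lia.
rewrite big1_seq ?add0r; last first.
  move=> j /andP[_]; rewrite mem_index_iota => /andP[_ Hj].
  rewrite /G Hut ?mul0r // inordK; have := Hf a; lia.
rewrite -{1}(add0n p.-1) big_addn.
have -> : (n.+1 - p.-1 = n.+1 - p + 1)%N by lia.
rewrite big_mkord; apply: eq_bigr => b _; rewrite !mxE /G.
have -> : (inord (b + p.-1) : 'I_n.+1) = f b.
  by apply: val_inj; rewrite /= inordK; have := Hf b; have := ltn_ord b; lia.
by [].
Qed.

Theorem mainTheorem6 (R : realType) (n m r : nat)
  (A0 : 'M[R[i]]_(n, m)) (A : nat -> 'M[R[i]]_n) (u : nat -> 'M[R[i]]_n) :
  (forall k, (1 <= k <= r)%N -> upper_tri (A k)) ->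
  (forall k, (1 <= k <= r.+1)%N -> unitri (u k)) ->
  forall (p k : nat) (f : 'I_(n - p + 1) -> 'I_n) (s : 'I_(n - p + 1) -> 'I_m),
    (1 <= p <= n)%N -> (k <= r)%N ->
    (forall a : 'I_(n - p + 1), nat_of_ord (f a) = (p.-1 + a)%N) ->
    (forall a b : 'I_(n - p + 1), (a < b)%N -> (s a < s b)%N) ->
    minor f s (path_prod (act0 u A0) (actA u A) k) = minor f s (path_prod A0 A k).
Proof.
move=> HA Hu p k f s Hp Hk Hf Hs.
have Hpp : forall k, (k <= r)%N ->
    path_prod (act0 u A0) (actA u A) k = u k.+1 *m path_prod A0 A k.
  elim=> [|k' IH] Hk' //=.
  rewrite IH; last by lia.
  have Hun : u k'.+1 \in unitmx.
    by rewrite unitmxE det_unitri ?unitr1 //; apply: Hu; lia.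
  by rewrite /actA -!mulmxA (mulmxA (invmx _)) mulVmx // mul1mx.
rewrite Hpp // /minor mxsub_mul //; last by case: (Hu k.+1) => //; lia.
rewrite det_mulmx det_unitri_sub ?mul1r //.
  by apply: Hu; lia.
by move=> a b Hab; rewrite !Hf; lia.
Qed.
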